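(* Let $\mathsf A$ be an MDCS instance and let $\mathsf A'=\mathsf A\backslash E_e$ be obtained by deleting encoder $E_e$, with encoder set $\mathcal E'=\mathcal E\setminus\{E_e\}$. Writing $\mathrm{Proj}'$ for projection onto the coordinates $(H(X_k))_{k\in[[K]]}$ and $(R_i)_{i\in\mathcal E'}$, $$\mathcal R(\mathsf A')=\mathrm{Proj}'\big(\mathcal R(\mathsf A)\cap\{R_e=0\}\big),\quad \mathcal R_q(\mathsf A')=\mathrm{Proj}'\big(\mathcal R_q(\mathsf A)\cap\{R_e=0\}\big),$$ $$\mathcal R_{s,q}(\mathsf A')=\mathrm{Proj}'\big(\mathcal R_{s,q}(\mathsf A)\cap\{R_e=0\}\big),\quad \mathcal R_{sp}(\mathsf A')=\mathrm{Proj}'\big(\mathcal R_{sp}(\mathsf A)\cap\{R_e=0\}\big).$$ (Equivalently, the paper imposes $H(U_e)=0$, i.e. $h_{U_e}=0$, before projecting.)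
   Context: An MDCS instance $\mathsf{A}=(\mathbf X_{[[K]]},\mathcal E,\mathcal D,\mathbf L,\mathcal G)$ consists of $K$ mutually independent sources $X_1,\dots,X_K$, a finite set $\mathcal E$ of encoders $E_e$ (each has access to all sources and outputs a message $U_e$), a finite set $\mathcal D$ of decoders $D_d$, a level $\mathrm{Lev}(D_d)\in\{1,\dots,K\}$ for each decoder, and an edge set $\mathcal G\subseteq\mathcal E\times\mathcal D$; $\mathrm{Fan}(D_d)=\{E_e:(E_e,D_d)\in\mathcal G\}$, $\mathrm{Fan}(E_e)=\{D_d:(E_e,D_d)\in\mathcal G\}$; $D_d$ must recover $X_1,\dots,X_{\mathrm{Lev}(D_d)}$ from $U_e$, $E_e\in\mathrm{Fan}(D_d)$. Encoder deletion $\mathsf A\backslash E_e$: $\mathcal E'=\mathcal E\setminus\{E_e\}$; $\mathcal D'=\mathcal D\setminus\{D_j:\exists D_i\in\mathrm{Fan}(E_e)\setminus\{D_j\},\ \mathrm{Fan}(D_i)\setminus\{E_e\}\subseteq\mathrm{Fan}(D_j),\ \mathrm{Lev}(D_j)\le\mathrm{Lev}(D_i)\}$; levels of surviving decoders unchanged; edges restricted to $\mathcal E'\times\mathcal D'$ (a surviving decoder keeps its decoding requirement with access to its remaining encoders; if a decoder's fan becomes empty, the sources it demanded are removed as well). Rate regions: let $N=K+|\mathcal E|$ with random variables $Y_1,\dots,Y_K,U_e$ ($e\in\mathcal E$); $\mathbf h\in\mathbb R^{2^N-1}$ indexed by nonempty subsets of them; $h_{\mathcal A|\mathcal B}=h_{\mathcal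 A\cup\mathcal B}-h_{\mathcal B}$. $\mathcal L_1=\{\mathbf h\ge0:h_{Y_1\cdots Y_K}=\sum_kh_{Y_k}\}$, $\mathcal L_2=\{\mathbf h\ge0:h_{U_e|Y_1\cdots Y_K}=0\ \forall e\}$, $\mathcal L_5=\{\mathbf h\ge0:h_{Y_1\cdots Y_{\mathrm{Lev}(D_d)}|(U_e)_{E_e\in\mathrm{Fan}(D_d)}}=0\ \forall d\}$, $\mathcal L_{125}=\mathcal L_1\cap\mathcal L_2\cap\mathcal L_5$, $\mathcal L_4''=\{(\mathbf h,\mathbf R)\in\mathbb R^{2^N-1}_{\ge0}\times\mathbb R^{|\mathcal E|}_{\ge0}:R_e\ge h_{U_e}\ \forall e\}$. All regions live in coordinates $((H(X_k))_k,(R_e)_e)$, where $H(X_k)$ denotes the coordinate $h_{Y_k}$; $\mathrm{Proj}$ is coordinate projection onto these. $\Gamma^*_N$ is the set of entropic vectors, $\overline{\mathrm{con}}$ the closure of the conic hull. $\Gamma_N^q$: conic hull of rank functions $\mathcal A\mapsto\mathrm{rank}(\mathbb A_{:,\mathcal A})$ of matrices $\mathbb A$ over $\mathbb F_q$ with $N$ columns. $\Gamma^q_{N,\infty}$: conic hull of vectors $\mathcal A\mapsto\dim\sum_{i\in\mathcal A}V_i$ for subspaces $V_1,\dots,V_N$ of a finite-dimensional $\mathbb F_q$-vector space. Then $\mathcal R(\mathsf A)=\mathrm{Proj}(\overline{\mathrm{con}}(\Gamma^*_N\cap\mathcal L_1\cap\mathcal L_2)\cap\mathcal L_5\cap\mathcal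 L_4'')$ (the rate region: achievable source-entropy/encoder-rate tuples); $\mathcal R_q(\mathsf A)=\mathrm{Proj}(\Gamma^q_{N,\infty}\cap\mathcal L_{125}\cap\mathcal L_4'')$ (achievable by vector $\mathbb F_q$-linear codes); $\mathcal R_{s,q}(\mathsf A)=\mathrm{Proj}(\Gamma^q_N\cap\mathcal L_{125}\cap\mathcal L_4'')$ (achievable by scalar $\mathbb F_q$-linear codes); $\mathcal R_{sp}(\mathsf A)=\mathrm{Proj}_{(R_e),(H(X_k))}\{(R_e,H(X_k),R_e^{X_k})_{e,k}\ge0: R_e=\sum_{i=1}^KR_e^{X_i}\ \forall e;\ \sum_{e:E_e\in\mathrm{Fan}(D_d)}R_e^{X_i}\ge H(X_i)\ \forall d\in\mathcal D,\ i\le\mathrm{Lev}(D_d)\}$ (superposition coding region). *)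

(* Defs.v *)
From HB Require Import structures.
From mathcomp Require Import all_boot all_order all_algebra all_field.
From Stdlib Require Import Reals.
Set Implicit Arguments. Unset Strict Implicit. Unset Printing Implicit Defensive.

Local Open Scope R_scope.

Definition rsum (T : finType) (P : pred T) (f : T -> R) : R :=
  \big[Rplus/R0]_(x | P x) f x.

(* ---------- vectors indexed by subsets of the N random variables ----------
   A vector of R^(2^N-1) (indexed by nonempty subsets) is represented as a
   function on all subsets; every generator used below has value 0 on the
   empty set, so the extra coordinate is always 0. *)
Definition svec (V : finType) := {set V} -> R.

Definition cone (V : finType) (S : svec V -> Prop) (h : svec V) : Prop :=
  exists (n : nat) (c : 'I_n -> R) (g : 'I_n -> svec V),
    (forall i, 0 <= c i) /\ (forall i, S (g i)) /\
    (forall A, h A = rsum predT (fun i => c i * g i A)).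

Definition closure (V : finType) (S : svec V -> Prop) (h : svec V) : Prop :=
  forall eps, 0 < eps ->
    exists h', S h' /\ forall A, Rabs (h A - h' A) < eps.

Definition log2 (x : R) : R := ln x / ln 2.

(* Shannon entropy (bits) of a pmf q on a finite set (0 log 0 = 0 since 0*_=0) *)
Definition entropy (T : finType) (q : T -> R) : R :=
  - rsum predT (fun t => q t * log2 (q t)).

(* the value of the subfamily X_A of an outcome x of (X_v)_v *)
Definition restr (V : finType) (m : nat) (A : {set V}) (x : {ffun V -> 'I_m})
  : {ffun V -> option 'I_m} :=
  [ffun v => if v \in A then Some (x v) else None].

Definition marg (V : finType) (m : nat) (p : {ffun V -> 'I_m} -> R)
  (A : {set V}) (a : {ffun V -> option 'I_m}) : R :=
  rsum (fun x => restr A x == a) p.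

(* entropic vectors Gamma*_N: h_A = H(X_A) for finite-alphabet random
   variables (X_v)_{v in V} (a common finite alphabet 'I_m is used w.l.o.g.) *)
Definition entropic (V : finType) (h : svec V) : Prop :=
  exists (m : nat) (p : {ffun V -> 'I_m} -> R),
    (forall x, 0 <= p x) /\ rsum predT p = 1 /\
    (forall A, h A = entropy (marg p A)).

(* Gamma^q_N generators: A |-> rank of the columns of a matrix indexed by A *)
Definition col_rank_vec (F : fieldType) (V : finType) (r : nat)
  (M : 'M[F]_(r, #|V|)) : svec V :=
  fun A => INR (\rank (colsub (fun j : 'I_#|A| => enum_rank (enum_val j)) M)).

Definition scalar_rank_vec (F : fieldType) (V : finType) (h : svec V) : Prop :=
  exists (r : nat) (M : 'M[F]_(r, #|V|)), h = col_rank_vec M.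

(* Gamma^q_{N,infty} generators: A |-> dim sum_{v in A} V_v, subspaces of F^d
   (a subspace of F^d is represented as the row space of a d x d matrix) *)
Definition subspace_rank_vec (F : fieldType) (V : finType) (h : svec V) : Prop :=
  exists (d : nat) (W : V -> 'M[F]_d),
    forall A, h A = INR (\rank (\sum_(v in A) W v)%MS).

Definition Gamma_q (F : fieldType) (V : finType) := cone (@scalar_rank_vec F V).
Definition Gamma_q_inf (F : fieldType) (V : finType) := cone (@subspace_rank_vec F V).

Record mdcs := MDCS {
  nsrc : nat;
  Enc : finType;
  Dec : finType;
  lev : Dec -> nat;
  edge : Enc -> Dec -> bool
}.

(* Lev(D) in {1,...,K}; distinct decoders are distinct (they differ in their
   fan or their level) -- the decoders form a *set* of (fan, level) data. *)
Definition mdcs_wf (A : mdcs) : Prop :=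
  (forall d : Dec A, is_true (leq 1 (lev d) && leq (lev d) (nsrc A))) /\
  (forall d1 d2 : Dec A, (forall x, edge x d1 = edge x d2) ->
      lev d1 = lev d2 -> d1 = d2).

Definition fanD (A : mdcs) (d : Dec A) : {set Enc A} := [set x | edge x d].

(* random variables Y_1..Y_K, U_e *)
Definition rv (A : mdcs) : finType := ('I_(nsrc A) + Enc A)%type.

Definition Yset (A : mdcs) (l : nat) : {set rv A} :=
  [set v : rv A | if v is inl k then ltn k l else false].
Definition Yall (A : mdcs) : {set rv A} := Yset A (nsrc A).
Definition Uset (A : mdcs) (S : {set Enc A}) : {set rv A} := inr @: S.

Definition cond (V : finType) (h : svec V) (X Y : {set V}) : R := h (X :|: Y) - h Y.

Definition nonneg (V : finType) (h : svec V) : Prop := forall X, 0 <= h X.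

Definition L1 (A : mdcs) (h : svec (rv A)) : Prop :=
  nonneg h /\ h (Yall A) = rsum predT (fun k => h [set inl k]).

Definition L2 (A : mdcs) (h : svec (rv A)) : Prop :=
  nonneg h /\ forall e : Enc A, cond h [set inr e] (Yall A) = 0.

Definition L5 (A : mdcs) (h : svec (rv A)) : Prop :=
  nonneg h /\ forall d : Dec A, cond h (Yset A (lev d)) (Uset (fanD d)) = 0.

Definition L125 (A : mdcs) (h : svec (rv A)) : Prop := L1 h /\ L2 h /\ L5 h.

Definition L4 (A : mdcs) (h : svec (rv A)) (Rt : Enc A -> R) : Prop :=
  nonneg h /\ (forall e, 0 <= Rt e) /\ (forall e, h [set inr e] <= Rt e).

(* regions: predicates on points ((H(X_k))_k, (R_e)_e) *)
Definition region (A : mdcs) := ('I_(nsrc A) -> R) -> (Enc A -> R) -> Prop.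

Definition proj_region (A : mdcs) (S : svec (rv A) -> Prop) : region A :=
  fun H Rt => exists h, S h /\ L4 h Rt /\ forall k, H k = h [set inl k].

Definition rate_region (A : mdcs) : region A :=
  proj_region (fun h => closure (cone (fun g => entropic g /\ L1 g /\ L2 g)) h
                        /\ L5 h).

Definition rate_region_q (F : fieldType) (A : mdcs) : region A :=
  proj_region (fun h => Gamma_q_inf F h /\ L125 h).

Definition rate_region_sq (F : fieldType) (A : mdcs) : region A :=
  proj_region (fun h => Gamma_q F h /\ L125 h).

Definition rate_region_sp (A : mdcs) : region A :=
  fun H Rt => exists r : Enc A -> 'I_(nsrc A) -> R,
    (forall e, 0 <= Rt e) /\ (forall k, 0 <= H k) /\ (forall e k, 0 <= r e k) /\
    (forall e, Rt e = rsum predT (r e)) /\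
    (forall (d : Dec A) (k : 'I_(nsrc A)), is_true (ltn k (lev d)) ->
        rsum (fun x => x \in fanD d) (fun x => r x k) >= H k).

Definition dec_removed (A : mdcs) (e : Enc A) (dj : Dec A) : bool :=
  [exists di : Dec A, [&& edge e di, di != dj,
     fanD di :\ e \subset fanD dj & leq (lev dj) (lev di)]].

Definition del_enc (A : mdcs) (e : Enc A) : mdcs :=
  @MDCS (nsrc A) {x : Enc A | x != e} {d : Dec A | ~~ dec_removed e d}
    (fun d => lev (val d)) (fun x d => edge (val x) (val d)).

Definition proj_del (A : mdcs) (e : Enc A) (S : region A) : region (del_enc e) :=
  fun H Rt' => exists Rt : Enc A -> R,
    S H Rt /\ Rt e = 0 /\ forall x : Enc (del_enc e), Rt' x = Rt (val x).

Definition region_eq (A : mdcs) (S1 S2 : region A) : Prop :=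
  forall H Rt, S1 H Rt <-> S2 H Rt.

Arguments rate_region A _ _ : clear implicits.
Arguments rate_region_q F A _ _ : clear implicits.
Arguments rate_region_sq F A _ _ : clear implicits.
Arguments rate_region_sp A _ _ : clear implicits.
Arguments proj_del {A} e S _ _.
Arguments del_enc {A} e.

(* Main.v *)
Require Import Defs.
From HB Require Import structures.
From mathcomp Require Import all_boot all_order all_algebra all_field zify.
From Stdlib Require Import Reals Lra FunctionalExtensionality.
Set Implicit Arguments. Unset Strict Implicit. Unset Printing Implicit Defensive.

Module S1.

HB.instance Definition _ := Monoid.isComLaw.Build R 0%R Rplus (fun a b c => esym (Rplus_assoc a b c)) Rplus_comm Rplus_0_l.

Local Open Scope R_scope.

Section RSum.
Variable T : finType.

Lemma rsum_le (P : pred T) (f g : T -> R) :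
  (forall x, P x -> f x <= g x) -> rsum P f <= rsum P g.
Proof.
move=> H; rewrite /rsum; apply: (big_rec2 (fun a b => a <= b)); first lra.
move=> i a b Pi ab; have := H i Pi; lra.
Qed.

Lemma rsum_ge0 (P : pred T) (f : T -> R) :
  (forall x, P x -> 0 <= f x) -> 0 <= rsum P f.
Proof.
move=> H; rewrite /rsum; apply: (big_rec (fun a => 0 <= a)); first lra.
move=> i a Pi ab; have := H i Pi; lra.
Qed.

Lemma rsum_mkcond (P : pred T) (f : T -> R) :
  rsum P f = rsum predT (fun x => if P x then f x else 0).
Proof. by rewrite /rsum big_mkcond. Qed.

Lemma rsum_ext (P : pred T) (f g : T -> R) :
  (forall x, P x -> f x = g x) -> rsum P f = rsum P g.
Proof. by move=> H; rewrite /rsum; apply: eq_bigr. Qed.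

Lemma rsum_extP (P Q : pred T) (f : T -> R) :
  P =1 Q -> rsum P f = rsum Q f.
Proof. by move=> H; rewrite /rsum; apply: eq_bigl. Qed.

Lemma rsum_add (P : pred T) (f g : T -> R) :
  rsum P (fun x => f x + g x) = rsum P f + rsum P g.
Proof. by rewrite /rsum big_split. Qed.

Lemma rsum_mull (P : pred T) (f : T -> R) a :
  rsum P (fun x => a * f x) = a * rsum P f.
Proof.
rewrite /rsum; apply: (big_rec2 (fun u v => u = a * v)); first lra.
by move=> i u v _ ->; lra.
Qed.

Lemma rsum_mulr (P : pred T) (f : T -> R) a :
  rsum P (fun x => f x * a) = rsum P f * a.
Proof.
rewrite /rsum; apply: (big_rec2 (fun u v => u = v * a)); first lra.
by move=> i u v _ ->; lra.
Qed.

Lemma rsum_opp (P : pred T) (f : T -> R) :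
  rsum P (fun x => - f x) = - rsum P f.
Proof.
rewrite /rsum; apply: (big_rec2 (fun u v => u = - v)); first lra.
by move=> i u v _ ->; lra.
Qed.

Lemma rsum0 (P : pred T) : rsum P (fun _ => 0) = 0.
Proof. rewrite /rsum; apply: big1 => //. Qed.

Lemma rsum_sub (P Q : pred T) (f : T -> R) :
  (forall x, 0 <= f x) -> (forall x, P x -> Q x) -> rsum P f <= rsum Q f.
Proof.
move=> f0 PQ; rewrite (rsum_mkcond P) (rsum_mkcond Q); apply: rsum_le => x _.
case Px: (P x); first by rewrite (PQ x Px); lra.
case: (Q x); [exact: f0 | lra].
Qed.

Lemma rsum_D1 (P : pred T) (f : T -> R) x :
  P x -> rsum P f = f x + rsum (fun y => P y && (y != x)) f.
Proof. by move=> Px; rewrite /rsum (bigD1 x). Qed.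

Lemma rsum_ge_term (P : pred T) (f : T -> R) x :
  (forall y, 0 <= f y) -> P x -> f x <= rsum P f.
Proof.
move=> f0 Px; rewrite (rsum_D1 _ Px).
have := @rsum_ge0 (fun y => P y && (y != x)) f (fun y _ => f0 y); lra.
Qed.

Lemma rsum_pred1 (f : T -> R) x : rsum (fun y => y == x) f = f x.
Proof. by rewrite /rsum big_pred1_eq. Qed.

Lemma rsum_predT1 (f : T -> R) x : rsum predT (fun y => if y == x then f y else 0) = f x.
Proof. by rewrite -rsum_mkcond rsum_pred1. Qed.

Lemma rsum_exchange (U : finType) (P : pred T) (Q : pred U) (F : T -> U -> R) :
  rsum P (fun x => rsum Q (F x)) = rsum Q (fun y => rsum P (fun x => F x y)).
Proof. by rewrite /rsum exchange_big. Qed.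

Lemma rsum_partition (U : finType) (g : T -> U) (f : T -> R) :
  rsum predT f = rsum predT (fun u => rsum (fun x => g x == u) f).
Proof. by rewrite /rsum (partition_big g predT). Qed.

Lemma rsum_eq0 (P : pred T) (f : T -> R) :
  (forall x, 0 <= f x) -> rsum P f = 0 -> forall x, P x -> f x = 0.
Proof.
move=> f0 s0 x Px; have := rsum_ge_term f0 Px; have := f0 x.
have := @rsum_ge0 (fun y => P y && (y != x)) f (fun y _ => f0 y).
rewrite (rsum_D1 _ Px) in s0; lra.
Qed.

End RSum.

Lemma rsum_minus (T : finType) (P : pred T) (f g : T -> R) :
  rsum P (fun x => f x - g x) = rsum P f - rsum P g.
Proof.
rewrite /rsum; apply: (big_rec3 (fun u v w => u = v - w)); first lra.
by move=> i u v w _ ->; lra.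
Qed.

Lemma ln_le' x y : 0 < x -> x <= y -> ln x <= ln y.
Proof.
move=> x0 [xy|<-]; last lra.
by apply: Rlt_le; apply: ln_increasing.
Qed.

Lemma ln2_pos : 0 < ln 2.
Proof. rewrite -ln_1; apply: ln_increasing; lra. Qed.

Lemma ln_le_sub1 t : 0 < t -> ln t <= t - 1.
Proof. move=> t0; have := exp_ineq1_le (ln t); rewrite exp_ln //; lra. Qed.

Lemma Rinv_ge0 a : 0 <= a -> 0 <= / a.
Proof.
move=> [a0|<-]; last by rewrite Rinv_0; lra.
by apply: Rlt_le; apply: Rinv_0_lt_compat.
Qed.

Lemma Rmul_inv_le1 a : 0 <= a -> a * / a <= 1.
Proof.
move=> [a0|<-]; last by rewrite Rmult_0_l; lra.
by rewrite Rinv_r; lra.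
Qed.

End S1.
Import S1.

Module S2.
Local Open Scope R_scope.

Section Agree.
Variables (V : finType) (m : nat).
Local Notation X := {ffun V -> 'I_m}.
Implicit Types (S T : {set V}) (x y z : X).
Definition agree (S : {set V}) (x y : X) : bool :=
  [forall v, (v \in S) ==> (x v == y v)].

Lemma agree_refl S x : agree S x x.
Proof. by apply/forallP => v; apply/implyP. Qed.

Lemma agree_sym S x y : agree S x y = agree S y x.
Proof.
by apply/forallP/forallP => H v; apply/implyP => vS; have := implyP (H v) vS; rewrite eq_sym.
Qed.

Lemma agree_trans S x y z : agree S x y -> agree S y z -> agree S x z.
Proof.
move=> /forallP H1 /forallP H2; apply/forallP => v; apply/implyP => vS.
by rewrite (eqP (implyP (H1 v) vS)) (implyP (H2 v) vS).
Qed.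

Lemma agree_sub S T x y : S \subset T -> agree T x y -> agree S x y.
Proof.
move=> /subsetP ST /forallP H; apply/forallP => v; apply/implyP => vS.
exact: (implyP (H v) (ST v vS)).
Qed.

Lemma agree_U S T x y : agree (S :|: T) x y = agree S x y && agree T x y.
Proof.
apply/idP/andP => [H|[H1 H2]].
  by split; apply: agree_sub H; rewrite ?subsetUl ?subsetUr.
apply/forallP => v; apply/implyP; rewrite inE => /orP[vS|vT].
  exact: (implyP (forallP H1 v) vS).
exact: (implyP (forallP H2 v) vT).
Qed.

Lemma agree_l S x y z : agree S x y -> agree S x z = agree S z y.
Proof.
move=> H; apply/idP/idP => H'.
  by rewrite agree_sym; apply: agree_trans H'; rewrite agree_sym.
by apply: agree_trans H _; rewrite agree_sym.
Qed.

Lemma restr_eq S (x y : X) : (restr S y == restr S x) = agree S x y.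
Proof.
apply/eqP/forallP => [H v | H].
  apply/implyP => vS; have := congr1 (fun f : {ffun V -> option 'I_m} => f v) H.
  by rewrite !ffunE vS; case=> ->.
apply/ffunP => v; rewrite !ffunE; case vS: (v \in S) => //.
by rewrite (eqP (implyP (H v) vS)).
Qed.
End Agree.

Section Shannon.
Variables (V : finType) (m : nat) (p : {ffun V -> 'I_m} -> R).
Hypotheses (p0 : forall x, 0 <= p x) (p1 : rsum predT p = 1).
Local Notation X := {ffun V -> 'I_m}.
Implicit Types (S T : {set V}) (x y z : X).

Definition Qm S (x : X) := rsum (agree S x) p.
Definition entS S := - rsum predT (fun x => p x * ln (Qm S x)) / ln 2.

Lemma entE S : entropy (marg p S) = entS S.
Proof.
have key : rsum predT (fun a => marg p S a * ln (marg p S a)) =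
           rsum predT (fun x => p x * ln (Qm S x)).
  rewrite (rsum_partition (restr S) (fun x => p x * ln (Qm S x))).
  apply: rsum_ext => a _; rewrite /marg -rsum_mulr.
  apply: rsum_ext => x /eqP Hx.
  by rewrite /Qm -Hx (rsum_extP _ (restr_eq S x)).
rewrite /entropy /entS /log2.
transitivity (- (rsum predT (fun a => marg p S a * ln (marg p S a)) * / ln 2)).
  congr (- _); rewrite -rsum_mulr; apply: rsum_ext => a _; rewrite /Rdiv; ring.
rewrite key /Rdiv; ring.
Qed.

Lemma Qm_ge S x : p x <= Qm S x.
Proof. by apply: rsum_ge_term => //; apply: agree_refl. Qed.

Lemma Qm_anti S T x : S \subset T -> Qm T x <= Qm S x.
Proof. by move=> ST; apply: rsum_sub => // y; apply: agree_sub. Qed.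

Lemma Qm0 x : Qm set0 x = 1.
Proof.
rewrite /Qm -p1; apply: rsum_extP => y; apply/forallP => v.
by rewrite inE.
Qed.

Lemma entS0 : entS set0 = 0.
Proof.
rewrite /entS (rsum_ext (g := fun _ => 0)) ?rsum0; first lra.
by move=> x _; rewrite Qm0 ln_1; lra.
Qed.

Lemma entS_mono S T : S \subset T -> entS S <= entS T.
Proof.
move=> ST; rewrite /entS /Rdiv.
have l2 := Rinv_0_lt_compat _ ln2_pos.
suff : rsum predT (fun x => p x * ln (Qm T x)) <= rsum predT (fun x => p x * ln (Qm S x)) by nra.
apply: rsum_le => x _.
case: (p0 x) => px; last by rewrite -px; lra.
apply: Rmult_le_compat_l; first lra.
apply: ln_le'; last exact: Qm_anti.
by apply: Rlt_le_trans (Qm_ge _ _).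
Qed.

Let tt S T x := Qm S x * (Qm T x * (p x * / Qm (S :|: T) x * / Qm (S :&: T) x)).

Lemma sum_tt_le1 S T : rsum predT (tt S T) <= 1.
Proof.
set U := S :|: T; set I := S :&: T.
have IS : I \subset S by rewrite subsetIl.
have IT : I \subset T by rewrite subsetIr.
pose G x y w := (if agree S x y then p y else 0) *
   ((if agree T x w then p w else 0) * (p x * / Qm U x * / Qm I x)).
have E1 : forall x, tt S T x = rsum predT (fun y => rsum predT (fun w => G x y w)).
  move=> x; rewrite /tt /Qm (rsum_mkcond (agree S x)) -rsum_mulr.
  apply: rsum_ext => y _; rewrite (rsum_mkcond (agree T x)) -rsum_mulr -rsum_mull.
  by apply: rsum_ext.
rewrite (rsum_ext (g := fun x => rsum predT (fun y => rsum predT (fun w => G x y w))));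
  last by move=> x _; apply: E1.
rewrite rsum_exchange.
rewrite (rsum_ext (g := fun y => rsum predT (fun w => rsum predT (fun x => G x y w))));
  last by move=> y _; rewrite rsum_exchange.
apply: Rle_trans (_ : rsum predT (fun y => rsum predT (fun w =>
      if agree I y w then p y * p w * / Qm I y else 0)) <= 1).
  apply: rsum_le => y _; apply: rsum_le => w _.
  pose C x := agree S x y && agree T x w.
  pose PC := rsum C p.
  have HU : forall x, C x -> Qm U x = PC.
    move=> x /andP[h1 h2]; rewrite /Qm /PC; apply: rsum_extP => z.
    by rewrite /U agree_U (agree_l z h1) (agree_l z h2).
  have HI : forall x, C x -> Qm I x = Qm I y.
    move=> x /andP[h1 _]; rewrite /Qm; apply: rsum_extP => z.
    have h3 := agree_sub IS h1.
    rewrite (agree_l z h3) agree_sym; done.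
  have HIyw : forall x, C x -> agree I y w.
    move=> x /andP[h1 h2]; apply: (@agree_trans _ _ _ _ x).
      by rewrite agree_sym; apply: agree_sub h1.
    by apply: agree_sub h2.
  rewrite (rsum_ext (g := fun x => if C x then p x * (p y * p w * / PC * / Qm I y) else 0)); last first.
    move=> x _; rewrite /G /C.
    case h1: (agree S x y); case h2: (agree T x w) => /=; try lra.
    have Cx : C x by rewrite /C h1 h2.
    rewrite (HU x Cx) (HI x Cx); lra.
  rewrite -rsum_mkcond rsum_mulr -/PC.
  have PC0 : 0 <= PC by apply: rsum_ge0.
  case Iyw: (agree I y w).
    have := Rmul_inv_le1 PC0.
    have : 0 <= p y * p w * / Qm I y.
      apply: Rmult_le_pos; first by apply: Rmult_le_pos.
      by apply: Rinv_ge0; apply: rsum_ge0.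
    have -> : PC * (p y * p w * / PC * / Qm I y) = (PC * / PC) * (p y * p w * / Qm I y) by ring.
    move: (p y * p w * / Qm I y) => K; move: (PC * / PC) => r; nra.
  have -> : PC = 0.
    rewrite /PC (rsum_ext (g := fun _ => 0)) ?rsum0 //.
    by move=> x Cx; move: (HIyw x Cx); rewrite Iyw.
  lra.
rewrite -p1; apply: rsum_le => y _.
rewrite -rsum_mkcond.
rewrite (rsum_ext (g := fun w => p y * / Qm I y * p w)); last by move=> w _; lra.
rewrite rsum_mull -/(Qm I y).
have := Rmul_inv_le1 (rsum_ge0 (P := agree I y) (fun z _ => p0 z)).
rewrite -/(Qm I y) => H.
have := p0 y; nra.
Qed.

Lemma entS_submod S T : entS (S :|: T) + entS (S :&: T) <= entS S + entS T.
Proof.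
set U := S :|: T; set I := S :&: T.
have key : rsum predT (fun x => p x * ln (Qm S x) + p x * ln (Qm T x)
   - p x * ln (Qm U x) - p x * ln (Qm I x)) <= 0.
  apply: Rle_trans (_ : rsum predT (fun x => tt S T x - p x) <= 0); last first.
    by rewrite rsum_minus p1; have := sum_tt_le1 S T; lra.
  apply: rsum_le => x _.
  case: (p0 x) => px; last by rewrite /tt -px; lra.
  have qs := Rlt_le_trans _ _ _ px (Qm_ge S x).
  have qt := Rlt_le_trans _ _ _ px (Qm_ge T x).
  have qu := Rlt_le_trans _ _ _ px (Qm_ge U x).
  have qi := Rlt_le_trans _ _ _ px (Qm_ge I x).
  have iu := Rinv_0_lt_compat _ qu.
  have ii := Rinv_0_lt_compat _ qi.
  have tpos : 0 < Qm S x * Qm T x * / Qm U x * / Qm I x.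
    by repeat apply: Rmult_lt_0_compat.
  have := ln_le_sub1 tpos.
  rewrite ln_mult // ?ln_mult // ?ln_Rinv //; try by repeat apply: Rmult_lt_0_compat.
  rewrite /tt => H.
  have : p x * (ln (Qm S x) + ln (Qm T x) + - ln (Qm U x) + - ln (Qm I x)) <=
         p x * (Qm S x * Qm T x * / Qm U x * / Qm I x - 1).
    by apply: Rmult_le_compat_l; lra.
  move=> H2; rewrite -/U -/I; nra.
rewrite !rsum_minus rsum_add in key.
rewrite /entS /Rdiv.
have l2 := Rinv_0_lt_compat _ ln2_pos.
move: key; rewrite -/U -/I.
move: (rsum predT (fun x => p x * ln (Qm S x))) (rsum predT (fun x => p x * ln (Qm T x)))
  (rsum predT (fun x => p x * ln (Qm U x))) (rsum predT (fun x => p x * ln (Qm I x))) (/ ln 2) l2.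
move=> a b c d k k0 H; nra.
Qed.

End Shannon.

End S2.
Import S2.

Module S3.
Local Open Scope R_scope.

Definition polym (V : finType) (h : svec V) : Prop :=
  (forall S T : {set V}, S \subset T -> h S <= h T) /\
  (forall S T : {set V}, h (S :|: T) + h (S :&: T) <= h S + h T) /\
  h set0 = 0.

Lemma entropic_polym (V : finType) (h : svec V) : entropic h -> polym h.
Proof.
case=> m [p [p0 [p1 hE]]].
split; [|split].
- by move=> S T ST; rewrite !hE !entE //; apply: entS_mono.
- by move=> S T; rewrite !hE !entE //; apply: entS_submod.
- by rewrite hE entE //; apply: entS0.
Qed.

Lemma cone_polym (V : finType) (G : svec V -> Prop) (h : svec V) :
  (forall g, G g -> polym g) -> cone G h -> polym h.
Proof.
move=> Gp [n [c [g [c0 [Gg hE]]]]].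
split; [|split].
- move=> S T ST; rewrite !hE; apply: rsum_le => i _.
  apply: Rmult_le_compat_l => //; by case: (Gp _ (Gg i)) => H _; apply: H.
- move=> S T; rewrite !hE -!rsum_add; apply: rsum_le => i _.
  case: (Gp _ (Gg i)) => _ [H _]; have := H S T; have := c0 i; nra.
- rewrite hE (rsum_ext (g := fun _ => 0)) ?rsum0 // => i _.
  by case: (Gp _ (Gg i)) => _ [_ ->]; lra.
Qed.

Lemma le_eps a b : (forall eps, 0 < eps -> a <= b + eps) -> a <= b.
Proof.
move=> H; apply: Rnot_lt_le => ba.
have := H ((a - b) / 2); lra.
Qed.

Lemma closure_polym (V : finType) (G : svec V -> Prop) (h : svec V) :
  (forall g, G g -> polym g) -> Defs.closure G h -> polym h.
Proof.
move=> Gp cl; split; [|split].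
- move=> S T ST; apply: le_eps => eps e0.
  have [h' [Gh' H]] := cl (eps / 2) ltac:(lra).
  case: (Gp _ Gh') => M _; have := M S T ST.
  have := H S; have := H T; move=> /Rabs_def2 [? ?] /Rabs_def2 [? ?]; lra.
- move=> S T; apply: le_eps => eps e0.
  have [h' [Gh' H]] := cl (eps / 4) ltac:(lra).
  case: (Gp _ Gh') => _ [M _]; have := M S T.
  have := H S; have := H T; have := H (S :|: T); have := H (S :&: T).
  move=> /Rabs_def2 [? ?] /Rabs_def2 [? ?] /Rabs_def2 [? ?] /Rabs_def2 [? ?]; lra.
- apply: Rle_antisym; apply: le_eps => eps e0;
  have [h' [Gh' H]] := cl eps e0;
  case: (Gp _ Gh') => _ [_ Z]; have := H set0; rewrite Z => /Rabs_def2 [? ?]; lra.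
Qed.

Lemma cone_comp (V W : finType) (G : svec V -> Prop) (G' : svec W -> Prop)
  (f : {set W} -> {set V}) (h : svec V) :
  (forall g, G g -> G' (fun S => g (f S))) -> cone G h -> cone G' (fun S => h (f S)).
Proof.
move=> GG [n [c [g [c0 [Gg hE]]]]].
exists n, c, (fun i S => g i (f S)); split; [|split] => //.
by move=> i; apply: GG.
Qed.

Lemma closure_comp (V W : finType) (G : svec V -> Prop) (G' : svec W -> Prop)
  (f : {set W} -> {set V}) (h : svec V) :
  (forall g, G g -> G' (fun S => g (f S))) -> Defs.closure G h -> Defs.closure G' (fun S => h (f S)).
Proof.
move=> GG cl eps e0; have [h' [Gh' H]] := cl eps e0.
by exists (fun S => h' (f S)); split; [apply: GG | move=> S; apply: H].
Qed.

Section PolymFacts.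
Variables (V : finType) (h : svec V).
Hypothesis hp : polym h.
Implicit Types (S T X Z : {set V}).

Lemma pm_mono S T : S \subset T -> h S <= h T.
Proof. by case: hp => H _; apply: H. Qed.
Lemma pm_sub S T : h (S :|: T) + h (S :&: T) <= h S + h T.
Proof. by case: hp => _ [H _]; apply: H. Qed.
Lemma pm0 : h set0 = 0.
Proof. by case: hp => _ [_ H]. Qed.

Lemma pm_ge0 S : 0 <= h S.
Proof. rewrite -pm0; apply: pm_mono; exact: sub0set. Qed.

Lemma cond_ge0 X Z : 0 <= cond h X Z.
Proof. rewrite /cond; have := pm_mono (subsetUr X Z); lra. Qed.

Lemma cond_mono X Z X' Z' :
  X \subset X' -> Z' \subset Z -> cond h X Z <= cond h X' Z'.
Proof.
move=> XX ZZ; rewrite /cond.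
have h1 : h (X :|: Z) <= h (X' :|: Z) by apply: pm_mono; apply: setSU.
have h2 := pm_sub (X' :|: Z') Z.
have e1 : X' :|: Z' :|: Z = X' :|: Z.
  by rewrite -setUA (setUidPr ZZ).
have h3 : h Z' <= h ((X' :|: Z') :&: Z).
  apply: pm_mono; rewrite subsetI ZZ andbT; exact: subsetUr.
rewrite e1 in h2; lra.
Qed.

Lemma pm_drop X v : h [set v] = 0 -> h (X :\ v) = h X.
Proof.
move=> hv; apply: Rle_antisym; first by apply: pm_mono; apply: subD1set.
have := pm_sub (X :\ v) [set v].
have -> : (X :\ v) :&: [set v] = set0.
  by apply/setP => u; rewrite !inE; case: (u == v); rewrite /= ?andbF.
rewrite pm0 hv.
have : h X <= h (X :\ v :|: [set v]).
  by apply: pm_mono; apply/subsetP => u uX; rewrite !inE; case: eqP => //= _; rewrite uX.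
lra.
Qed.
End PolymFacts.

End S3.
Import S3.

Module S4.

Section Mx.
Variables (F : fieldType).
Local Open Scope ring_scope.

Lemma rank_sum_eq d (I J : finType) (P : pred I) (Q : pred J)
  (A : I -> 'M[F]_d) (B : J -> 'M[F]_d) :
  (forall i, P i -> (A i <= \sum_(j | Q j) B j)%MS) ->
  (forall j, Q j -> (B j <= \sum_(i | P i) A i)%MS) ->
  \rank (\sum_(i | P i) A i)%MS = \rank (\sum_(j | Q j) B j)%MS.
Proof.
move=> H1 H2; apply/eqP; rewrite eqn_leq !mxrankS //; apply/sumsmx_subP => //.
Qed.

Lemma mx_polym (V : finType) d (W : V -> 'M[F]_d) :
  polym (fun S => INR (\rank (\sum_(v in S) W v)%MS)).
Proof.
split; [|split].
- move=> S T ST; apply: le_INR; apply/leP; apply: mxrankS.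
  apply/sumsmx_subP => v vS; apply: (sumsmx_sup v); first exact: (subsetP ST).
  exact: submx_refl.
- move=> S T; rewrite -!plus_INR; apply: le_INR; apply/leP.
  rewrite !plusE.
  rewrite -(mxrank_sum_cap (\sum_(v in S) W v)%MS (\sum_(v in T) W v)%MS).
  apply: leq_add; apply: mxrankS.
    apply/sumsmx_subP => v; rewrite inE => /orP[vS|vT].
      by apply: submx_trans (addsmxSl _ _); apply: (sumsmx_sup v) => //; apply: submx_refl.
    by apply: submx_trans (addsmxSr _ _); apply: (sumsmx_sup v) => //; apply: submx_refl.
  rewrite sub_capmx; apply/andP; split; apply/sumsmx_subP => v; rewrite inE => /andP[vS vT];
    by apply: (sumsmx_sup v) => //; apply: submx_refl.
- by rewrite big_pred0 ?mxrank0 // => v; rewrite inE.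
Qed.

Lemma subspace_polym (V : finType) (h : svec V) : subspace_rank_vec F h -> polym h.
Proof.
case=> d [W hE].
have -> : h = (fun S => INR (\rank (\sum_(v in S) W v)%MS)).
  by apply: FunctionalExtensionality.functional_extensionality => S.
exact: mx_polym.
Qed.

Lemma col_rank_vecE (V : finType) r (M : 'M[F]_(r, #|V|)) (S : {set V}) :
  col_rank_vec M S = INR (\rank (\sum_(v in S) <<row (enum_rank v) M^T>>)%MS).
Proof.
rewrite /col_rank_vec -mxrank_tr; congr INR.
set N := (colsub _ M)^T.
apply/eqP; rewrite eqn_leq !mxrankS //.
  apply/sumsmx_subP => v vS; rewrite genmxE.
  have := enum_rankK_in vS vS; set j := enum_rank_in vS v => Ej.
  have -> : row (enum_rank v) M^T = row j N.
    by apply/rowP => k; rewrite !mxE Ej.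
  exact: row_sub.
apply/row_subP => j.
have -> : row j N = row (enum_rank (enum_val j)) M^T.
  by apply/rowP => k; rewrite !mxE.
apply: (sumsmx_sup (enum_val j)); first exact: enum_valP.
by rewrite genmxE.
Qed.

Lemma scalar_subspace (V : finType) (h : svec V) : scalar_rank_vec F h -> subspace_rank_vec F h.
Proof.
case=> r [M ->]; exists r, (fun v => <<row (enum_rank v) M^T>>%MS) => S.
exact: col_rank_vecE.
Qed.

End Mx.

End S4.
Import S4.

Module S5.
Local Open Scope R_scope.

Section Del.
Variables (A : mdcs) (e : Enc A).
Local Notation A' := (del_enc e).
Implicit Types (S : {set rv A}).

Definition iota (v : rv A') : rv A :=
  match v with inl k => inl k | inr x => inr (val x) end.
Definition img (S : {set rv A'}) : {set rv A} := iota @: S.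
Definition pre (S : {set rv A}) : {set rv A'} := iota @^-1: S.
Definition pre_el (v : rv A) : option (rv A') :=
  match v with inl k => Some (inl k) | inr x => omap inr (insub x) end.

Lemma iota_inj : injective iota.
Proof. by move=> [k|x] [k'|x'] //= [] // H; [rewrite H | rewrite (val_inj H)]. Qed.

Lemma preU S1 S2 : pre (S1 :|: S2) = pre S1 :|: pre S2.
Proof. exact: preimsetU. Qed.

Lemma pre_el_iota v' : pre_el (iota v') = Some v'.
Proof. by case: v' => [k|x] //=; rewrite valK. Qed.

Lemma pre_el_cases v :
  (pre_el v = None /\ v = inr e) \/ (exists v', pre_el v = Some v' /\ v = iota v').
Proof.
case: v => [k|x]; first by right; exists (inl k).
case: (eqVneq x e) => [->|ne].
  by left; rewrite /= insubF //= eqxx.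
by right; exists (inr (Sub x ne)); rewrite /= insubT.
Qed.

Lemma inr_neq_e (x' : Enc A') : (inr (val x') == inr e :> rv A) = false.
Proof. by apply/eqP => -[] H; have := valP x'; rewrite /= H eqxx. Qed.

Lemma mem_img v' (S' : {set rv A'}) : (iota v' \in img S') = (v' \in S').
Proof. by rewrite /img mem_imset //; apply: iota_inj. Qed.

Lemma e_notin_img (S' : {set rv A'}) : (inr e \in img S') = false.
Proof.
apply/negbTE/imsetP => -[[k|x] _] //= [] ex.
by have := valP x; rewrite /= -ex eqxx.
Qed.

Lemma mem_pre v' S : (v' \in pre S) = (iota v' \in S).
Proof. by rewrite /pre inE. Qed.

Lemma img_pre S : img (pre S) = S :\ inr e.
Proof.
apply/setP => v; case: (pre_el_cases v) => [[_ ->]|[v' [_ ->]]].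
  by rewrite e_notin_img !inE eqxx.
rewrite mem_img mem_pre !inE; case: v' => [k|x] //=.
by rewrite inr_neq_e.
Qed.

Lemma img_pre_id S : inr e \notin S -> img (pre S) = S.
Proof.
move=> nS; rewrite img_pre; apply/setP => v; rewrite !inE.
by case: eqP => // ->; rewrite (negbTE nS).
Qed.

Lemma pre_Yset l : pre (Yset A l) = Yset A' l.
Proof. by apply/setP => -[k|x]; rewrite mem_pre !inE. Qed.

Lemma pre_Yall : pre (Yall A) = Yall A'.
Proof. exact: pre_Yset. Qed.

Lemma pre_inl k : pre [set inl k] = [set (inl k : rv A')].
Proof. by apply/setP => -[k'|x]; rewrite mem_pre !inE. Qed.

Lemma pre_inr x' : pre [set inr (val x')] = [set (inr x' : rv A')].
Proof.
apply/setP => -[k'|y]; rewrite mem_pre !inE //=.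
Qed.

Lemma pre_inr_e : pre [set inr e] = set0.
Proof.
apply/setP => -[k'|y]; rewrite mem_pre !inE //=.
by apply/negbTE; apply/eqP => -[] ye; have := valP y; rewrite /= ye eqxx.
Qed.

Lemma pre_Uset (F : {set Enc A}) :
  pre (Uset F) = Uset [set x' : Enc A' | val x' \in F].
Proof.
apply/setP => -[k'|y]; rewrite mem_pre /Uset.
  by apply/idP/idP => /imsetP [].
by rewrite /= !mem_imset ?inE //; move=> ? ? [].
Qed.

Lemma fanD_del (d' : Dec A') : fanD d' = [set x' : Enc A' | val x' \in fanD (val d')].
Proof. by apply/setP => x'; rewrite !inE. Qed.

Lemma Yset_noe l : inr e \notin Yset A l.
Proof. by rewrite inE. Qed.

Lemma nonneg_img (h : svec (rv A)) : Defs.nonneg h -> Defs.nonneg (fun S' : {set rv A'} => h (img S')).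
Proof. by move=> H S. Qed.
Lemma nonneg_pre (h : svec (rv A')) : Defs.nonneg h -> Defs.nonneg (fun S => h (pre S)).
Proof. by move=> H S. Qed.

Lemma L1_img (h : svec (rv A)) : L1 h -> L1 (fun S' : {set rv A'} => h (img S')).
Proof.
case=> nn E; split; first exact: nonneg_img.
rewrite -pre_Yall img_pre_id ?Yset_noe // E.
by apply: rsum_ext => k _; rewrite -pre_inl img_pre_id // inE.
Qed.

Lemma L2_img (h : svec (rv A)) : L2 h -> L2 (fun S' : {set rv A'} => h (img S')).
Proof.
case=> nn E; split; first exact: nonneg_img.
move=> x'; rewrite /cond -pre_Yall -pre_inr -preU.
rewrite !img_pre_id; first exact: E.
  by rewrite inE.
by rewrite !inE eq_sym inr_neq_e.
Qed.

Lemma L5_img (h : svec (rv A)) : polym h -> h [set inr e] = 0 -> L5 h -> L5 (fun S' : {set rv A'} => h (img S')).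
Proof.
move=> hp he [nn E]; split; first exact: nonneg_img.
move=> d'; rewrite /cond /= fanD_del -pre_Uset -pre_Yset -preU !img_pre.
by rewrite !(pm_drop hp) //; apply: E.
Qed.

Lemma L1_pre (h : svec (rv A')) : L1 h -> L1 (fun S => h (pre S)).
Proof.
case=> nn E; split; first exact: nonneg_pre.
rewrite pre_Yall E; apply: rsum_ext => k _; by rewrite pre_inl.
Qed.

Lemma L2_pre (h : svec (rv A')) : L2 h -> L2 (fun S => h (pre S)).
Proof.
case=> nn E; split; first exact: nonneg_pre.
move=> x; rewrite /cond preU pre_Yall.
case: (eqVneq x e) => [->|ne].
  by rewrite pre_inr_e set0U; lra.
have -> : x = val (Sub x ne : Enc A') by [].
by rewrite pre_inr; apply: E.
Qed.

Definition ext_rate (Rt' : Enc A' -> R) (x : Enc A) : R :=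
  match insub x with Some x' => Rt' x' | None => 0 end.

Lemma ext_rate_val Rt' x' : ext_rate Rt' (val x') = Rt' x'.
Proof. by rewrite /ext_rate valK. Qed.

Lemma ext_rate_e Rt' : ext_rate Rt' e = 0.
Proof. by rewrite /ext_rate insubF //= eqxx. Qed.

Lemma L4_pre (h : svec (rv A')) Rt' :
  h set0 = 0 -> L4 h Rt' -> L4 (fun S => h (pre S)) (ext_rate Rt').
Proof.
move=> h0 [nn [R0 Rh]]; split; first exact: nonneg_pre.
split.
  by move=> x; rewrite /ext_rate; case: insub => //; lra.
move=> x; case: (eqVneq x e) => [->|ne].
  by rewrite pre_inr_e h0 ext_rate_e; lra.
have -> : x = val (Sub x ne : Enc A') by [].
by rewrite pre_inr ext_rate_val.
Qed.

Lemma L4_img (h : svec (rv A)) Rt :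
  L4 h Rt -> L4 (fun S' : {set rv A'} => h (img S')) (fun x' => Rt (val x')).
Proof.
move=> [nn [R0 Rh]]; split; first exact: nonneg_img.
split; first by move=> x'; apply: R0.
move=> x'; rewrite -pre_inr img_pre_id; first exact: Rh.
by rewrite inE; apply/eqP => -[] ex; have := valP x'; rewrite /= -ex eqxx.
Qed.

End Del.

End S5.
Import S5.

Module S6.
Local Open Scope R_scope.

Lemma push_sum (X Y : finType) (p : X -> R) (f : X -> Y) (G : Y -> R) :
  rsum predT (fun y => rsum (fun x => f x == y) p * G y) =
  rsum predT (fun x => p x * G (f x)).
Proof.
rewrite (rsum_partition f (fun x => p x * G (f x))).
apply: rsum_ext => y _; rewrite -rsum_mulr; apply: rsum_ext => x /eqP ->; done.
Qed.

Lemma entropic_comp (V W : finType) m (p : {ffun V -> 'I_m} -> R)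
  (f : {ffun V -> 'I_m} -> {ffun W -> 'I_m}) (s : {set W} -> {set V}) :
  (forall x, 0 <= p x) -> rsum predT p = 1 ->
  (forall S x y, agree S (f x) (f y) = agree (s S) x y) ->
  entropic (fun S => entropy (marg p (s S))).
Proof.
move=> p0 p1 ag.
pose p' y := rsum (fun x => f x == y) p.
have p'0 : forall y, 0 <= p' y by move=> y; apply: rsum_ge0.
have p'1 : rsum predT p' = 1.
  by rewrite -p1 (rsum_partition f p).
exists m, p'; split => //; split => // S.
rewrite !entE //; rewrite /entS; congr (- _ / _).
rewrite push_sum; apply: rsum_ext => x _; congr (_ * ln _).
rewrite /Qm (rsum_mkcond (agree S (f x))).
rewrite (rsum_ext (g := fun y => p' y * (if agree S (f x) y then 1 else 0))); last first.
  by move=> y _; case: ifP => _; lra.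
rewrite push_sum (rsum_mkcond (agree (s S) x)); apply: rsum_ext => z _.
by rewrite ag; case: ifP => _; lra.
Qed.

Lemma entS_single (V : finType) m (p : {ffun V -> 'I_m} -> R) S :
  rsum predT p = 1 -> (forall x y : {ffun V -> 'I_m}, x = y) -> entS p S = 0.
Proof.
move=> p1 all; rewrite /entS (rsum_ext (g := fun _ => 0)) ?rsum0; first lra.
move=> x _; rewrite /Qm (rsum_extP (Q := predT)) ?p1 ?ln_1; first lra.
by move=> y; rewrite (all x y) agree_refl.
Qed.

Lemma entropic_zero (V : finType) : entropic (fun _ : {set V} => 0).
Proof.
pose x0 : {ffun V -> 'I_1} := [ffun => ord0].
have q0 : forall x, 0 <= (if x == x0 then 1 else 0) by move=> x; case: ifP => _; lra.
have q1 : rsum predT (fun x => if x == x0 then 1 else 0) = 1.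
  by rewrite (rsum_predT1 (fun _ => 1)).
exists 1%nat, (fun x => if x == x0 then 1 else 0); split; [|split] => // S.
rewrite entE // entS_single // => x y.
by apply/ffunP => v; rewrite (ord1 (x v)) (ord1 (y v)).
Qed.

Section Del2.
Variables (A : mdcs) (e : Enc A).
Local Notation A' := (del_enc e).
Local Notation iota := (@S5.iota A e).
Local Notation img := (@S5.img A e).
Local Notation pre := (@S5.pre A e).
Local Notation pre_el := (@S5.pre_el A e).

Lemma pre_el_e : pre_el (inr e) = None.
Proof. by rewrite /S5.pre_el /= insubF //= eqxx. Qed.

Lemma entropic_img (g : svec (rv A)) : entropic g -> entropic (fun S' => g (img S')).
Proof.
case=> m [p [p0 [p1 gE]]].
have -> : (fun S' => g (img S')) = (fun S' => entropy (marg p (img S'))).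
  by apply: functional_extensionality => S'; rewrite gE.
pose pi (x : {ffun rv A -> 'I_m}) : {ffun rv A' -> 'I_m} := [ffun v' => x (iota v')].
apply: (@entropic_comp (rv A) (rv A') m p pi img p0 p1) => S' x y.
apply/forallP/forallP => H v.
  apply/implyP => /imsetP [v' v'S ->].
  by have := implyP (H v') v'S; rewrite !ffunE.
apply/implyP => vS; have := implyP (H (iota v)) (imset_f _ vS).
by rewrite !ffunE.
Qed.

Lemma entropic_pre (g : svec (rv A')) : entropic g -> entropic (fun S => g (pre S)).
Proof.
case=> m [p [p0 [p1 gE]]].
have -> : (fun S => g (pre S)) = (fun S => entropy (marg p (pre S))).
  by apply: functional_extensionality => S; rewrite gE.
case: m p p0 p1 gE => [|m] p p0 p1 gE.
  have -> : (fun S => entropy (marg p (pre S))) = (fun _ => 0).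
    apply: functional_extensionality => S; rewrite entE // entS_single //.
    by move=> x y; apply/ffunP => v; case: (x v).
  exact: entropic_zero.
pose phi (x : {ffun rv A' -> 'I_m.+1}) : {ffun rv A -> 'I_m.+1} :=
  [ffun v => match pre_el v with Some v' => x v' | None => ord0 end].
apply: (@entropic_comp (rv A') (rv A) m.+1 p phi pre p0 p1) => S x y.
apply/forallP/forallP => H v.
  apply/implyP; rewrite mem_pre => vS.
  by have := implyP (H (iota v)) vS; rewrite !ffunE pre_el_iota.
apply/implyP => vS; rewrite !ffunE.
case: (pre_el_cases e v) => [[-> _]//|[v' [-> Ev]]].
by have := implyP (H v'); rewrite mem_pre -Ev => /(_ vS).
Qed.

Variable (F : fieldType).
Local Open Scope ring_scope.

Lemma rank_img d (W : rv A -> 'M[F]_d) (W' : rv A' -> 'M[F]_d) :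
  (forall v', W' v' = W (iota v')) -> forall S' : {set rv A'},
  \rank (\sum_(v' in S') W' v')%MS = \rank (\sum_(v in img S') W v)%MS.
Proof.
move=> WE S'; apply: rank_sum_eq.
  move=> v' v'S; rewrite WE; apply: (sumsmx_sup (iota v')); last exact: submx_refl.
  by rewrite mem_img.
move=> v /imsetP [v' v'S ->]; rewrite -WE.
by apply: (sumsmx_sup v') => //; apply: submx_refl.
Qed.

Lemma rank_pre d (W : rv A -> 'M[F]_d) (W' : rv A' -> 'M[F]_d) :
  (forall v', W' v' = W (iota v')) -> (W (inr e) <= (0 : 'M_d))%MS -> forall S : {set rv A},
  \rank (\sum_(v' in pre S) W' v')%MS = \rank (\sum_(v in S) W v)%MS.
Proof.
move=> WE We S; apply: rank_sum_eq.
  move=> v'; rewrite mem_pre => vS; rewrite WE.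
  by apply: (sumsmx_sup (iota v')) => //; apply: submx_refl.
move=> v; case: (pre_el_cases e v) => [[_ ->]|[v' [_ ->]]] vS.
  by apply: submx_trans We _; apply: sub0mx.
rewrite -WE; apply: (sumsmx_sup v'); last exact: submx_refl.
by rewrite mem_pre.
Qed.

Lemma subspace_img (g : svec (rv A)) : subspace_rank_vec F g ->
  subspace_rank_vec F (fun S' => g (img S')).
Proof.
case=> d [W gE]; exists d, (fun v' => W (iota v')) => S'.
by rewrite gE (rank_img (W := W)).
Qed.

Lemma subspace_pre (g : svec (rv A')) : subspace_rank_vec F g ->
  subspace_rank_vec F (fun S => g (pre S)).
Proof.
case=> d [W' gE].
exists d, (fun v => match pre_el v with Some v' => W' v' | None => 0 end) => S.
rewrite gE (rank_pre (W := fun v => match pre_el v with Some v' => W' v' | None => 0 end)) //.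
  by move=> v'; rewrite pre_el_iota.
by rewrite pre_el_e; apply: sub0mx.
Qed.

Lemma scalar_img (g : svec (rv A)) : scalar_rank_vec F g ->
  scalar_rank_vec F (fun S' => g (img S')).
Proof.
case=> r [M ->].
exists r, (\matrix_(i, j) M i (enum_rank (iota (enum_val j)))).
apply: functional_extensionality => S'.
rewrite !col_rank_vecE; congr INR; symmetry.
apply: (rank_img (W := fun v => <<row (enum_rank v) M^T>>%MS)) => v'.
by congr (<< _ >>%MS); apply/rowP => k; rewrite !mxE enum_rankK.
Qed.

Lemma scalar_pre (g : svec (rv A')) : scalar_rank_vec F g ->
  scalar_rank_vec F (fun S => g (pre S)).
Proof.
case=> r [M ->].
exists r, (\matrix_(i, j) match pre_el (enum_val j) with
                          Some v' => M i (enum_rank v') | None => 0 end).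
apply: functional_extensionality => S.
rewrite !col_rank_vecE; congr INR.
apply: (rank_pre (W := fun v => <<row (enum_rank v) (\matrix_(i, j) match pre_el (enum_val j) with
                          Some v' => M i (enum_rank v') | None => 0 end)^T>>%MS)).
  move=> v'; congr (<< _ >>%MS); apply/rowP => k.
  by rewrite !mxE enum_rankK pre_el_iota.
have -> : row (enum_rank (inr e : rv A)) (\matrix_(i, j) match pre_el (enum_val j) with
                          Some v' => M i (enum_rank v') | None => 0 end)^T = 0.
  by apply/rowP => k; rewrite !mxE enum_rankK pre_el_e.
by rewrite genmx0 submx_refl.
Qed.

End Del2.

End S6.
Import S6.

Module S7.
Local Open Scope R_scope.

Section Del3.
Variables (A : mdcs) (e : Enc A).
Hypothesis wf : mdcs_wf A.
Local Notation A' := (del_enc e).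
Local Notation iota := (@S5.iota A e).
Local Notation img := (@S5.img A e).
Local Notation pre := (@S5.pre A e).

Lemma survive dj : dec_removed e dj -> exists di : Dec A,
  ~~ dec_removed e di /\ fanD di :\ e \subset fanD dj /\ (lev dj <= lev di)%nat.
Proof.
move=> /existsP [d0 /and4P [ed0 _ sub0 lev0]].
pose cand (d : Dec A) := [&& edge e d, fanD d :\ e \subset fanD dj & (lev dj <= lev d)%nat].
pose key (d : Dec A) := (#|fanD d| * (nsrc A).+1 + (nsrc A - lev d))%nat.
have c0 : cand d0 by rewrite /cand ed0 sub0 lev0.
case: (arg_minnP key c0) => di cdi kmin.
case/and3P: cdi => edi subi levi.
exists di; split; last by split.
apply/negP => /existsP [dk /and4P [edk nki subk levk]].
have subki : fanD dk \subset fanD di.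
  apply/subsetP => x; rewrite inE => xk.
  case: (eqVneq x e) => [->|ne]; first by rewrite inE.
  by apply: (subsetP subk); rewrite !inE ne.
have ck : cand dk.
  rewrite /cand edk (leq_trans levi levk) andbT.
  apply/subsetP => x; rewrite !inE => /andP [ne xk].
  have : x \in fanD dj.
    have xi : x \in fanD di by apply: (subsetP subki); rewrite inE.
    by apply: (subsetP subi); rewrite !inE ne /=; rewrite inE in xi.
  by rewrite inE.
have kk := kmin dk ck; rewrite /key in kk.
have card := subset_leq_card subki.
have [Li _] := andP (wf.1 di); have [Lk _] := andP (wf.1 dk).
move: (wf.1 di) (wf.1 dk) => /andP [_ li] /andP [_ lk].
have [clt|ceq] : (#|fanD dk| < #|fanD di|)%nat \/ #|fanD dk| = #|fanD di|.
- by rewrite ltn_neqAle card andbT; case: eqP; [right|left].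
- have := leq_mul clt (leqnn (nsrc A).+1); rewrite mulSn => H; lia.
have levEq : lev dk = lev di by rewrite ceq in kk; lia.
have fEq : fanD dk = fanD di by apply/eqP; rewrite eqEcard subki ceq leqnn.
have eE : forall x, edge x dk = edge x di.
  by move=> x; have := congr1 (fun S : {set Enc A} => x \in S) fEq; rewrite !inE.
by have E := wf.2 dk di eE levEq; rewrite E eqxx in nki.
Qed.

Lemma L5_pre (h : svec (rv A')) : polym h -> L5 h -> L5 (fun S => h (pre S)).
Proof.
move=> hp [nn E]; split; first exact: nonneg_pre.
move=> d.
have key : cond h (Yset A' (lev d)) (Uset [set x' : Enc A' | val x' \in fanD d]) = 0.
  case rem: (dec_removed e d).
  - have [di [ndi [subi levi]]] := survive rem.
    pose di' : Dec A' := exist _ di ndi.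
    have Ei := E di'; rewrite /= in Ei.
    apply: Rle_antisym; last exact: (cond_ge0 hp).
    rewrite -Ei; apply: (cond_mono hp).
      apply/subsetP => -[k|x]; rewrite !inE // => kl.
      exact: leq_trans kl levi.
    apply: imsetS; apply/subsetP => x'; rewrite !inE => ex.
    have ex' : edge (val x') di := ex.
    have : val x' \in fanD di :\ e by rewrite !inE (valP x') ex'.
    by move/(subsetP subi); rewrite inE.
  - pose d' : Dec A' := exist _ d (negbT rem).
    by have := E d'; rewrite fanD_del.
by move: key; rewrite /cond preU pre_Yset pre_Uset.
Qed.

End Del3.

End S7.
Import S7.

Module S8.
Local Open Scope R_scope.

Section Del4.
Variables (A : mdcs) (e : Enc A).
Local Notation A' := (del_enc e).
Local Notation iota := (@S5.iota A e).
Local Notation img := (@S5.img A e).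
Local Notation pre := (@S5.pre A e).

Lemma region_transfer (C : svec (rv A) -> Prop) (C' : svec (rv A') -> Prop) :
  (forall h, C h -> polym h) -> (forall h', C' h' -> polym h') ->
  (forall h, C h -> h [set inr e] = 0 -> C' (fun S' => h (img S'))) ->
  (forall h', C' h' -> C (fun S => h' (pre S))) ->
  region_eq (proj_region C') (proj_del e (proj_region C)).
Proof.
move=> Cp C'p Rr Pp H Rt'; split.
- case=> h' [C'h [L4h Hk]]; exists (ext_rate Rt'); split; [|split].
  + exists (fun S => h' (pre S)); split; first exact: Pp.
    split; first by apply: L4_pre => //; apply: (pm0 (C'p _ C'h)).
    by move=> k; rewrite Hk pre_inl.
  + exact: ext_rate_e.
  + by move=> x'; rewrite ext_rate_val.
- case=> Rt [[h [Ch [L4h Hk]]] [Re Rt'E]].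
  have he : h [set inr e] = 0.
    case: L4h => nn [_ Rh]; have := nn [set inr e]; have := Rh e; rewrite Re; lra.
  exists (fun S' => h (img S')); split; first exact: Rr.
  split.
    have -> : Rt' = (fun x' => Rt (val x')) by apply: functional_extensionality.
    exact: L4_img.
  by move=> k; rewrite Hk -pre_inl img_pre_id // inE.
Qed.

Lemma sum_del (P : pred (Enc A)) (f : Enc A -> R) : f e = 0 ->
  rsum P f = rsum (fun x' : Enc A' => P (val x')) (fun x' => f (val x')).
Proof.
move=> fe.
rewrite (rsum_mkcond (fun x' : Enc A' => P (val x'))).
rewrite (rsum_partition (fun x' : Enc A' => val x')) (rsum_mkcond P).
apply: rsum_ext => x _.
case: (eqVneq x e) => [->|ne].
  rewrite (rsum_ext (g := fun _ => 0)) ?rsum0; first by case: (P e); rewrite ?fe.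
  by move=> x' /eqP ex; move: (valP x'); rewrite /= ex eqxx.
rewrite (rsum_extP (Q := fun x' => x' == (Sub x ne : Enc A'))); last first.
  by move=> x'; rewrite -val_eqE.
by rewrite rsum_pred1.
Qed.

Lemma sp_transfer : mdcs_wf A ->
  region_eq (rate_region_sp A') (proj_del e (rate_region_sp A)).
Proof.
move=> wf H Rt'; split.
- case=> r' [R0 [H0 [r0 [RE D]]]].
  pose r (x : Enc A) k := match insub x with Some x' => r' x' k | None => 0 end.
  have rval : forall x' k, r (val x') k = r' x' k by move=> x' k; rewrite /r valK.
  have re : forall k, r e k = 0 by move=> k; rewrite /r insubF //= eqxx.
  exists (ext_rate Rt'); split; [|split].
  + exists r; split; [|split; [|split; [|split]]].
    * by move=> x; rewrite /ext_rate; case: insub => [x'|]; [apply: R0|lra].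
    * exact: H0.
    * by move=> x k; rewrite /r; case: insub => [x'|]; [apply: r0|lra].
    * move=> x; rewrite /ext_rate /r; case: insub => [x'|]; first exact: RE.
      by rewrite rsum0.
    * move=> d k kl; apply: Rle_ge.
      rewrite (sum_del (fun x => x \in fanD d) (f := fun x => r x k)) ?re //.
      rewrite (rsum_ext (g := fun x' => r' x' k)); last by move=> x' _; rewrite rval.
      case rem: (dec_removed e d).
      - have [di [ndi [subi levi]]] := survive wf rem.
        pose di' : Dec A' := exist _ di ndi.
        have := D di' k (leq_trans kl levi) => /Rge_le Hd.
        apply: Rle_trans Hd _; apply: rsum_sub; first by move=> x'; apply: r0.
        move=> x'; rewrite !inE => ex.
        have ex' : edge (val x') di := ex.
        have : val x' \in fanD di :\ e by rewrite !inE (valP x') ex'.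
        by move/(subsetP subi); rewrite inE.
      - pose d' : Dec A' := exist _ d (negbT rem).
        have := D d' k kl => /Rge_le Hd.
        apply: Rle_trans Hd _; apply: rsum_sub; first by move=> x'; apply: r0.
        by move=> x'; rewrite !inE.
  + exact: ext_rate_e.
  + by move=> x'; rewrite ext_rate_val.
- case=> Rt [[r [R0 [H0 [r0 [RE D]]]]] [Re Rt'E]].
  have re : forall k, r e k = 0.
    move=> k; apply: (rsum_eq0 (P := predT) (f := r e)) => //.
    by rewrite -RE.
  exists (fun x' k => r (val x') k); split; [|split; [|split; [|split]]].
  + by move=> x'; rewrite Rt'E.
  + exact: H0.
  + by move=> x' k; apply: r0.
  + by move=> x'; rewrite Rt'E.
  + move=> d' k kl; have := D (val d') k kl.
    rewrite (sum_del (fun x => x \in fanD (val d')) (f := fun x => r x k)) ?re //.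
    rewrite (rsum_extP (Q := fun x' => x' \in fanD d')) //.
    by move=> x'; rewrite !inE.
Qed.

End Del4.


End S8.
Import S8.

Theorem theorem6 (F : finFieldType) (A : mdcs) (e : Enc A) :
  mdcs_wf A ->
  region_eq (rate_region (del_enc e)) (proj_del e (rate_region A)) /\
  region_eq (rate_region_q F (del_enc e)) (proj_del e (rate_region_q F A)) /\
  region_eq (rate_region_sq F (del_enc e)) (proj_del e (rate_region_sq F A)) /\
  region_eq (rate_region_sp (del_enc e)) (proj_del e (rate_region_sp A)).
Proof.
move=> wf; split; [|split; [|split]].
- apply: region_transfer.
  + move=> h [cl _]; apply: (closure_polym _ cl) => g cg.
    by apply: (cone_polym _ cg) => g' [E _]; apply: entropic_polym.
  + move=> h [cl _]; apply: (closure_polym _ cl) => g cg.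
    by apply: (cone_polym _ cg) => g' [E _]; apply: entropic_polym.
  + move=> h [cl L5h] he; split.
      apply: (closure_comp _ cl) => g cg; apply: (cone_comp _ cg).
      move=> g' [E [L1g L2g]]; split; [exact: entropic_img|split; [exact: L1_img|exact: L2_img]].
    apply: L5_img => //; apply: (closure_polym _ cl) => g cg.
    by apply: (cone_polym _ cg) => g' [E _]; apply: entropic_polym.
  + move=> h [cl L5h]; split.
      apply: (closure_comp _ cl) => g cg; apply: (cone_comp _ cg).
      move=> g' [E [L1g L2g]]; split; [exact: entropic_pre|split; [exact: L1_pre|exact: L2_pre]].
    apply: L5_pre => //; apply: (closure_polym _ cl) => g cg.
    by apply: (cone_polym _ cg) => g' [E _]; apply: entropic_polym.
- apply: region_transfer.
  + by move=> h [c _]; apply: (cone_polym _ c) => g; apply: subspace_polym.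
  + by move=> h [c _]; apply: (cone_polym _ c) => g; apply: subspace_polym.
  + move=> h [c [L1h [L2h L5h]]] he; split.
      by apply: (cone_comp _ c) => g; apply: subspace_img.
    split; [exact: L1_img|split; [exact: L2_img|]].
    apply: L5_img => //; apply: (cone_polym _ c) => g; apply: subspace_polym.
  + move=> h [c [L1h [L2h L5h]]]; split.
      by apply: (cone_comp _ c) => g; apply: subspace_pre.
    split; [exact: L1_pre|split; [exact: L2_pre|]].
    apply: L5_pre => //; apply: (cone_polym _ c) => g; apply: subspace_polym.
- apply: region_transfer.
  + by move=> h [c _]; apply: (cone_polym _ c) => g /scalar_subspace; apply: subspace_polym.
  + by move=> h [c _]; apply: (cone_polym _ c) => g /scalar_subspace; apply: subspace_polym.
  + move=> h [c [L1h [L2h L5h]]] he; split.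
      by apply: (cone_comp _ c) => g; apply: scalar_img.
    split; [exact: L1_img|split; [exact: L2_img|]].
    apply: L5_img => //; apply: (cone_polym _ c) => g /scalar_subspace; apply: subspace_polym.
  + move=> h [c [L1h [L2h L5h]]]; split.
      by apply: (cone_comp _ c) => g; apply: scalar_pre.
    split; [exact: L1_pre|split; [exact: L2_pre|]].
    apply: L5_pre => //; apply: (cone_polym _ c) => g /scalar_subspace; apply: subspace_polym.
- exact: sp_transfer.
Qed.
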